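(* Let $G$ be a connected graph with a pendant vertex $u$, and let $v$ be the unique neighbour of $u$, assumed to be a cut-vertex of $G$. If $G-\{v,u\}$ has at least two connected components, then $u$ is not a basis forced vertex of $G$.
   Context: All graphs are finite and simple. A pendant is a vertex with exactly one neighbour; a cut-vertex is a vertex $v$ such that $G-v$ is disconnected. For vertices $x,y$ of a connected graph $G$, $d(x,y)$ is the length of a shortest $x$–$y$ path. A set $R\subseteq V(G)$ is a resolving set if for all distinct $x,y\in V(G)$ there is $r\in R$ with $d(r,x)\neq d(r,y)$. The metric dimension $\dim(G)$ is the minimum cardinality of a resolving set, and a resolving set of cardinality $\dim(G)$ is a metric basis. A vertex is a basis forced vertex if it belongs to every metric basis of $G$. *)

(* Defs.v *)
From mathcomp Require Import all_boot.
Set Implicit Arguments. Unset Strict Implicit. Unset Printing Implicit Defensive.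

Definition simple_graph (T : finType) (e : rel T) : Prop :=
  symmetric e /\ irreflexive e.

Definition connected_graph (T : finType) (e : rel T) : Prop :=
  forall x y : T, connect e x y.

Definition induced (T : finType) (e : rel T) (S : {set T}) : rel T :=
  fun a b => [&& e a b, a \in S & b \in S].

Definition at_least_two_components (T : finType) (e : rel T) (S : {set T}) : Prop :=
  exists x y, [/\ x \in S, y \in S & ~~ connect (induced e S) x y].

Definition cut_vertex (T : finType) (e : rel T) (v : T) : Prop :=
  at_least_two_components e (~: [set v]).

Definition walk (T : finType) (e : rel T) (x y : T) (n : nat) : bool :=
  [exists p : n.-tuple T, path e x p && (last x p == y)].

(* d(x,y): the least length of an x-y walk (= shortest path length);
   in a connected graph this is < #|T|. *)
Definition dist (T : finType) (e : rel T) (x y : T) : nat :=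
  \big[minn/#|T|]_(n < #|T| | walk e x y n) n.

Definition resolving (T : finType) (e : rel T) (R : {set T}) : Prop :=
  forall x y : T, x != y -> exists2 r, r \in R & dist e r x != dist e r y.

Definition metric_basis (T : finType) (e : rel T) (R : {set T}) : Prop :=
  resolving e R /\ forall S : {set T}, resolving e S -> #|R| <= #|S|.

Definition basis_forced (T : finType) (e : rel T) (u : T) : Prop :=
  forall B : {set T}, metric_basis e B -> u \in B.

(* Main.v *)
Require Import Defs.
From mathcomp Require Import all_boot.
Set Implicit Arguments. Unset Strict Implicit. Unset Printing Implicit Defensive.

Lemma bigmin_le (I : eqType) (r : seq I) (P : pred I) (F : I -> nat) m i :
  i \in r -> P i -> \big[minn/m]_(j <- r | P j) F j <= F i.
Proof.
elim: r => [|a r IH] //=; rewrite big_cons inE => /orP[/eqP<- Pi|ir Pi].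
  by rewrite Pi geq_minl.
case: (P a); last exact: IH.
by rewrite (leq_trans (geq_minr _ _)) // IH.
Qed.

Lemma bigmin_idx (I : eqType) (r : seq I) (P : pred I) (F : I -> nat) m :
  \big[minn/m]_(j <- r | P j) F j <= m.
Proof.
elim: r => [|a r IH] //=; first by rewrite big_nil.
rewrite big_cons; case: (P a) => //.
by rewrite (leq_trans (geq_minr _ _)).
Qed.

Lemma bigmin_att (I : eqType) (r : seq I) (P : pred I) (F : I -> nat) m :
  \big[minn/m]_(j <- r | P j) F j = m \/
  exists2 i, P i & F i = \big[minn/m]_(j <- r | P j) F j.
Proof.
elim: r => [|a r IH] //=; first by rewrite big_nil; left.
rewrite big_cons; case Pa: (P a) => //.
rewrite /minn; case: ifP => _; first by right; exists a.
exact: IH.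
Qed.

Section Dist.
Variables (T : finType) (e : rel T).
Hypothesis esym : symmetric e.
Hypothesis conn : connected_graph e.

Lemma walkP x y n :
  reflect (exists p : seq T, [/\ size p = n, path e x p & last x p = y])
          (walk e x y n).
Proof.
apply: (iffP existsP) => [[p /andP[pp /eqP lp]] | [p [sp pp lp]]].
  by exists (val p); rewrite size_tuple.
have sp' : size p == n by rewrite sp.
by exists (Tuple sp'); rewrite /= pp lp eqxx.
Qed.

Lemma walk_cat x y z m n : walk e x y m -> walk e y z n -> walk e x z (m + n).
Proof.
move=> /walkP[p [<- pp lp]] /walkP[q [<- pq lq]]; apply/walkP.
exists (p ++ q); by rewrite size_cat cat_path last_cat lp pp pq lq.
Qed.

Lemma walk1 x y : e x y -> walk e x y 1.
Proof. by move=> exy; apply/walkP; exists [:: y]; rewrite /= exy. Qed.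

Lemma walk0 x : walk e x x 0.
Proof. by apply/walkP; exists [::]. Qed.

Lemma walk0E x y : walk e x y 0 -> x = y.
Proof. by move=> /walkP[[|a p] [//= _ _ ->]]. Qed.

Lemma walkS x y n : walk e x y n.+1 -> exists2 a, e x a & walk e a y n.
Proof.
move=> /walkP[[|a p] [//= [sp] /andP[xa pp] lp]].
by exists a => //; apply/walkP; exists p.
Qed.

Lemma walk_sym x y n : walk e x y n -> walk e y x n.
Proof.
elim: n x => [|n IH] x; first by move/walk0E->; apply: walk0.
move=> /walkS[a xa /IH ya]; rewrite -addn1; apply: walk_cat ya _.
by apply: walk1; rewrite esym.
Qed.

Lemma walk_ex x y : exists2 n, n < #|T| & walk e x y n.
Proof.
have /connectP[p pp ->] := conn x y.
case: (shortenP pp) => p' pp' up' _.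
exists (size p'); last by apply/walkP; exists p'.
have := card_uniqP up'; rewrite /= => <-.
exact: max_card.
Qed.

Lemma dist_le x y n : walk e x y n -> dist e x y <= n.
Proof.
move=> w; case: (ltnP n #|T|) => hn.
  have := @bigmin_le _ (index_enum 'I_#|T|) (fun i : 'I_#|T| => walk e x y i)
     (fun i : 'I_#|T| => nat_of_ord i) #|T| (Ordinal hn).
  by rewrite mem_index_enum; apply.
have [m hm wm] := walk_ex x y.
have := @bigmin_le _ (index_enum 'I_#|T|) (fun i : 'I_#|T| => walk e x y i)
     (fun i : 'I_#|T| => nat_of_ord i) #|T| (Ordinal hm).
rewrite mem_index_enum => /(_ isT wm) /= h.
rewrite /dist; apply: leq_trans h _; exact: leq_trans (ltnW hm) hn.
Qed.

Lemma dist_walk x y : walk e x y (dist e x y).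
Proof.
have [m hm wm] := walk_ex x y.
have hd := dist_le wm.
case: (@bigmin_att _ (index_enum 'I_#|T|) (fun i : 'I_#|T| => walk e x y i)
     (fun i : 'I_#|T| => nat_of_ord i) #|T|) => [h|[i wi hi]].
  by move: hd; rewrite /dist h => h2; rewrite ltnNge h2 in hm.
by rewrite /dist -hi.
Qed.

Lemma dist_tri x y z : dist e x z <= dist e x y + dist e y z.
Proof. apply: dist_le; apply: walk_cat; apply: dist_walk. Qed.

Lemma dist_sym x y : dist e x y = dist e y x.
Proof.
by apply/eqP; rewrite eqn_leq !dist_le // walk_sym // dist_walk.
Qed.

Lemma dist0 x : dist e x x = 0.
Proof. by apply/eqP; rewrite -leqn0 dist_le // walk0. Qed.

Lemma dist0E x y : dist e x y = 0 -> x = y.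
Proof. by move=> h; have := dist_walk x y; rewrite h => /walk0E. Qed.

Lemma dist_edge x y : e x y -> dist e x y <= 1.
Proof. by move=> h; apply: dist_le; apply: walk1. Qed.

Lemma dist_split a b p z : path e a p -> z \in p -> last a p = b ->
  dist e a z + dist e z b <= size p.
Proof.
move=> pp zp lp; move: pp lp; case/splitPr: zp => p1 p2.
rewrite cat_path last_cat /= => /andP[pp1 /andP[ez pp2]] lp.
rewrite size_cat /=.
apply: (@leq_trans (size (rcons p1 z) + size p2)); last first.
  by rewrite size_rcons addSn addnS.
apply: leq_add; apply: dist_le; apply/walkP.
  by exists (rcons p1 z); rewrite rcons_path pp1 ez last_rcons.
by exists p2.
Qed.

End Dist.

Definition resolvingb (T : finType) (e : rel T) (R : {set T}) :=
  [forall x, forall y, (x != y) ==> [exists r in R, dist e r x != dist e r y]].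

Lemma resolvingP (T : finType) (e : rel T) (R : {set T}) :
  reflect (resolving e R) (resolvingb e R).
Proof.
apply: (iffP forallP) => [H x y xy | H x].
  move: (H x) => /forallP/(_ y)/implyP/(_ xy)/existsP[r /andP[rR ne]].
  by exists r.
apply/forallP => y; apply/implyP => xy; have [r rR ne] := H x y xy.
by apply/existsP; exists r; rewrite rR ne.
Qed.

Section Main.
Variables (T : finType) (e : rel T) (u v : T).
Hypotheses (esym : symmetric e) (eirr : irreflexive e) (conn : connected_graph e).
Hypotheses (euv : e u v) (upend : forall w, e u w -> w = v).

Local Notation d := (dist e).
Local Notation S' := (~: [set v; u]).
Local Notation K := (connect (induced e (~: [set v; u]))).

Lemma dT x y z : d x z <= d x y + d y z. Proof. exact: dist_tri conn x y z. Qed.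
Lemma dS x y : d x y = d y x. Proof. exact: dist_sym esym conn x y. Qed.
Lemma dle x y n : walk e x y n -> d x y <= n. Proof. exact: (@dist_le _ _ conn x y n). Qed.
Lemma d0 x : d x x = 0. Proof. exact: dist0 conn x. Qed.
Lemma d0E x y : d x y = 0 -> x = y. Proof. exact: (@dist0E _ _ conn x y). Qed.
Lemma dW x y : walk e x y (d x y). Proof. exact: (@dist_walk _ _ conn x y). Qed.

Lemma uv : u != v.
Proof. by apply/eqP => h; move: euv; rewrite h eirr. Qed.

Lemma inS' t : (t \in S') = (t != v) && (t != u).
Proof. by rewrite !inE negb_or. Qed.

Lemma dist_edge1 x y : e x y -> d x y = 1.
Proof.
move=> h; apply/eqP; rewrite eqn_leq (dist_edge conn h) /= lt0n; apply/eqP => /d0E.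
by move=> xy; move: h; rewrite xy eirr.
Qed.

Lemma dist_vu : d v u = 1.
Proof. by apply: dist_edge1; rewrite esym. Qed.

Lemma pend x : x != u -> d u x = (d v x).+1.
Proof.
move=> xu; apply/eqP; rewrite eqn_leq; apply/andP; split.
  by rewrite (leq_trans (dT u v x)) // (dist_edge1 euv).
have w := dW u x; case E: (d u x) w => [|n] w.
  by move: xu; rewrite -(walk0E w) eqxx.
have [a ua aw] := walkS w; rewrite (upend ua) in aw.
exact: dle aw.
Qed.

Lemma pend' x : x != u -> d x u = d x v + d v u.
Proof. by move=> xu; rewrite dist_vu addn1 dS pend // dS. Qed.

Lemma Ksym x y : K x y = K y x.
Proof.
apply: sym_connect_sym => a b; rewrite /induced esym.
by case: (a \in _); case: (b \in _); rewrite ?andbF.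
Qed.

Lemma avoid a p : a \in S' -> path e a p -> v \notin p -> K a (last a p).
Proof.
elim: p a => [|x p IH] a aS /=; first by rewrite connect0.
move=> /andP[ax pp]; rewrite inE negb_or => /andP[xv vp].
have xu : x != u.
  apply/eqP => xu; move: aS; rewrite xu in ax; rewrite esym in ax.
  by rewrite (upend ax) inS' eqxx.
have xS : x \in S' by rewrite inS' eq_sym xv xu.
apply: connect_trans (connect1 _) (IH x xS pp vp).
by rewrite /induced ax aS xS.
Qed.

Lemma sep a b : a \in S' -> b \in S' -> ~~ K a b -> d a b = d a v + d v b.
Proof.
move=> aS bS nK; apply/eqP; rewrite eqn_leq dT /=.
have /walkP[p [sp pp lp]] := dW a b.
have vp : v \in p.
  apply/negPn/negP => vp; have := avoid aS pp vp; rewrite lp.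
  by apply/negP.
by rewrite -sp; exact: (@dist_split _ _ conn a b p v pp vp lp).
Qed.

Lemma toward_aux a p : a \in S' -> path e a p -> v \in p ->
  exists w, [/\ w \in S', K a w & e w v].
Proof.
elim: p a => [|x p IH] a aS //= /andP[ax pp].
case: (eqVneq x v) => [xv _|xv]; first by exists a; rewrite aS connect0 -xv.
rewrite inE eq_sym (negbTE xv) /= => vp.
have xu : x != u.
  apply/eqP => xu; move: aS; rewrite xu in ax; rewrite esym in ax.
  by rewrite (upend ax) inS' eqxx.
have xS : x \in S' by rewrite inS' xv xu.
have [w [wS Kxw wv]] := IH x xS pp vp.
exists w; split=> //; apply: connect_trans Kxw.
by apply: connect1; rewrite /induced ax aS xS.
Qed.

Lemma toward a : a \in S' -> exists w, [/\ w \in S', K a w & e w v].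
Proof.
move=> aS; have /connectP[p pp lp] := conn a v.
apply: (toward_aux aS pp).
have := mem_last a p; rewrite -lp inE => /orP[/eqP av|//].
by move: aS; rewrite -av inS' eqxx.
Qed.

Lemma edge_v w : e w v -> d v w = 1.
Proof. by move=> h; apply: dist_edge1; rewrite esym. Qed.

Variable B : {set T}.
Hypotheses (Bres : resolving e B) (Bmin : forall S, resolving e S -> #|B| <= #|S|).
Hypothesis uB : u \in B.
Hypothesis two : exists a b, [/\ a \in S', b \in S' & ~~ K a b].

Local Notation S := (B :\ u).

Lemma inS r : r \in S -> r != u.
Proof. by rewrite in_setD1 => /andP[]. Qed.

Lemma Bfail x z : x != z -> (forall r, r \in S -> d r x = d r z) ->
  d u x = d u z -> False.
Proof.
move=> xz HS Hu; have [r rB] := Bres xz.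
case: (eqVneq r u) => [->|ru]; first by rewrite Hu eqxx.
by rewrite HS ?eqxx // in_setD1 ru rB.
Qed.

Lemma S_nonempty : exists r, r \in S.
Proof.
have [a [b [aS bS nK]]] := two.
have [wa [waS Ka wav]] := toward aS.
have [wb [wbS Kb wbv]] := toward bS.
have ne : wa != wb.
  apply/eqP => h; move/negP: nK; apply; apply: connect_trans Ka _.
  by rewrite Ksym h.
have [r rB] := Bres ne.
case: (eqVneq r u) => [ru|ru].
  rewrite ru !pend ?edge_v //.
    by move: wbS; rewrite inS' => /andP[].
  by move: waS; rewrite inS' => /andP[].
by exists r; rewrite in_setD1 ru.
Qed.

Lemma S_sub r : r \in S -> r \in B.
Proof. by rewrite in_setD1 => /andP[]. Qed.

Lemma S'_neq t : t \in S' -> t != v /\ t != u.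
Proof. by rewrite inS' => /andP[]. Qed.

Section Case1.
Variables c w : T.
Hypotheses (cS : c \in S') (cmiss : forall r, r \in S -> ~~ K c r).
Hypotheses (wS : w \in S') (Kcw : K c w) (wv : e w v).

Definition P t := (t == u) || ((t \in S') && K c t).

Lemma F1 r t : r \in S -> P t -> d r t = d r v + d v t.
Proof.
move=> rS; have ru := inS rS.
case/orP => [/eqP->|/andP[tS Kct]]; first exact: pend'.
case: (eqVneq r v) => [->|rv]; first by rewrite d0.
have rS' : r \in S' by rewrite inS' rv ru.
apply: sep => //; apply/negP => Krt; move/negP: (cmiss rS); apply.
by apply: connect_trans Kct _; rewrite Ksym.
Qed.

Lemma F2 t : ~~ P t -> d w t = (d v t).+1 /\ d u t = (d v t).+1.
Proof.
rewrite /P negb_or => /andP[tu nP]; split; last exact: pend.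
case: (eqVneq t v) => [->|tv]; first by rewrite d0 dS edge_v.
have tS : t \in S' by rewrite inS' tv tu.
have nK : ~~ K w t.
  apply/negP => Kwt; move/negP: nP; apply; rewrite tS /=.
  exact: connect_trans Kcw Kwt.
by rewrite (sep wS tS nK) dS edge_v.
Qed.

Lemma Pw : P w.
Proof. by rewrite /P wS Kcw orbT. Qed.

Lemma Pu : P u.
Proof. by rewrite /P eqxx. Qed.

Lemma dwu : d w u = 2.
Proof.
have [_ wu] := S'_neq wS.
by rewrite (pend' wu) dist_vu dS (edge_v wv).
Qed.

Lemma duw : d u w = 2.
Proof. by rewrite dS dwu. Qed.

Lemma Svec_uw r : r \in S -> d r w = d r u.
Proof. by move=> rS; rewrite (F1 rS Pw) (F1 rS Pu) (edge_v wv) dist_vu. Qed.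

Lemma case1_u z : z != u -> (forall r, r \in S -> d r u = d r z) ->
  d w u = d w z -> False.
Proof.
move=> zu HS; rewrite dwu => Hw.
have zw : z != w by apply/eqP => zw; move: Hw; rewrite zw d0.
have HS' r : r \in S -> d r z = d r w by move=> rS; rewrite Svec_uw // HS.
have [r0 r0S] := S_nonempty.
case Pz: (P z).
  have := HS r0 r0S; rewrite (F1 r0S Pu) (F1 r0S Pz) dist_vu => /addnI dz.
  by apply: (Bfail zw HS'); rewrite duw (pend zu) -dz.
have [h1 h2] := F2 (negbT Pz).
apply: (Bfail zw HS'); by rewrite duw h2 -h1.
Qed.

Lemma case1_mixed x z : x != u -> P x -> ~~ P z ->
  (forall r, r \in S -> d r x = d r z) -> d w x = d w z -> False.
Proof.
move=> xu Px nPz HS Hw.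
have xz : x != z by apply/eqP => xz; move: nPz; rewrite -xz Px.
have [r0 r0S] := S_nonempty.
have [h1 h2] := F2 nPz.
have le1 : d v x <= d v z.
  by have := dT r0 v z; rewrite -(HS r0 r0S) (F1 r0S Px) leq_add2l.
have le2 : d v z <= d v x.
  by have := dT w v x; rewrite Hw h1 (dS w v) (edge_v wv) add1n ltnS.
apply: (Bfail xz HS); rewrite (pend xu) h2.
by have -> : d v x = d v z by apply/eqP; rewrite eqn_leq le1 le2.
Qed.

Lemma case1 : resolving e (w |: S).
Proof.
move=> x z xz.
case: (boolP [exists r in w |: S, d r x != d r z]) => [/existsP[r /andP[rin ne]]|H].
  by exists r.
exfalso.
have HS r : r \in S -> d r x = d r z.
  move=> rS; apply/eqP; move/existsPn: H => /(_ r); rewrite negb_and negbK.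
  by rewrite in_setU1 rS orbT.
have Hw : d w x = d w z.
  apply/eqP; move/existsPn: H => /(_ w); rewrite negb_and negbK.
  by rewrite in_setU1 eqxx.
case: (eqVneq x u) => [xu|xu].
  subst x; apply: (case1_u _ HS Hw); by rewrite eq_sym.
case: (eqVneq z u) => [zu|zu].
  subst z; apply: (case1_u xu) => [r rS|]; [by rewrite (HS r rS) | by rewrite Hw].
have [r0 r0S] := S_nonempty.
case Px: (P x); case Pz: (P z).
- have := HS r0 r0S; rewrite (F1 r0S Px) (F1 r0S Pz) => /addnI dz.
  by apply: (Bfail xz HS); rewrite (pend xu) (pend zu) dz.
- exact: (case1_mixed xu Px (negbT Pz) HS Hw).
- apply: (case1_mixed zu Pz (negbT Px)) => [r rS|]; [by rewrite (HS r rS) | by rewrite Hw].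
- have [h1 h2] := F2 (negbT Px); have [h3 h4] := F2 (negbT Pz).
  by apply: (Bfail xz HS); rewrite h2 h4 -h1 -h3.
Qed.

End Case1.

Section Case2.
Hypothesis hall : forall t, t \in S' -> exists2 r, r \in S & K t r.

Lemma L x : x != u -> exists2 r, r \in S & d r x = d r v + d v x.
Proof.
move=> xu; case: (eqVneq x v) => [->|xv].
  by have [r rS] := S_nonempty; exists r; rewrite // d0 addn0.
have xS : x \in S' by rewrite inS' xv xu.
have fin r : r \in S -> ~~ K x r -> exists2 r, r \in S & d r x = d r v + d v x.
  move=> rS nK; exists r => //; case: (eqVneq r v) => [->|rv]; first by rewrite d0.
  have rS' : r \in S' by rewrite inS' rv (inS rS).
  by apply: (sep rS' xS); rewrite Ksym; exact: nK.
have [a [b [aS bS nK]]] := two.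
case: (boolP (K a x)) => Kax.
  have [r rS Kbr] := hall bS; apply: (fin r rS); apply/negP => Kxr.
  move/negP: nK; apply; apply: connect_trans Kax (connect_trans Kxr _).
  by rewrite Ksym.
have [r rS Kar] := hall aS; apply: (fin r rS); apply/negP => Kxr.
move/negP: Kax; apply; apply: connect_trans Kar _; by rewrite Ksym.
Qed.

Lemma oneu z : z != u -> (forall r, r \in S -> d r u = d r z) -> d v z = 1.
Proof.
move=> zu HS; have [r rS h] := L zu.
by move: (HS r rS); rewrite h (pend' (inS rS)) dist_vu => /addnI.
Qed.

Lemma Spair x z : x != z -> (forall r, r \in S -> d r x = d r z) ->
  (x = u /\ d v z = 1) \/ (z = u /\ d v x = 1).
Proof.
move=> xz HS.
case: (eqVneq x u) => [xu|xu].
  subst x; left; split => //; apply: oneu HS; by rewrite eq_sym.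
case: (eqVneq z u) => [zu|zu].
  subst z; right; split => //; apply: oneu xu _ => r rS; by rewrite (HS r rS).
exfalso; apply: (Bfail xz HS); rewrite (pend xu) (pend zu).
have [r1 r1S h1] := L xu; have [r2 r2S h2] := L zu.
have le1 : d v x <= d v z by have := dT r1 v z; rewrite -(HS r1 r1S) h1 leq_add2l.
have le2 : d v z <= d v x by have := dT r2 v x; rewrite (HS r2 r2S) h2 leq_add2l.
by have -> : d v x = d v z by apply/eqP; rewrite eqn_leq le1 le2.
Qed.

Lemma c2u y z : y != u -> (forall r, r \in S -> d r u = d r y) -> d v y = 1 ->
  z != u -> (forall r, r \in S -> d r u = d r z) -> d v z = 1 ->
  exists2 r, r \in y |: S & d r u != d r z.
Proof.
move=> yu HSy hy zu HSz hz.
case: (eqVneq z y) => [->|zy].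
  exists y; first by rewrite in_setU1 eqxx.
  by rewrite d0 (pend' yu) dist_vu (dS y v) hy.
exfalso; apply: (Bfail zy) => [r rS|].
  by rewrite -(HSz r rS) (HSy r rS).
by rewrite (pend zu) (pend yu) hz hy.
Qed.

Lemma case2 : exists2 y, y != u & resolving e (y |: S).
Proof.
have nS : ~~ resolvingb e S.
  apply/negP => /resolvingP rS; have := Bmin rS; rewrite (cardsD1 u B) uB.
  by rewrite add1n ltnn.
move: nS => /forallPn[x /forallPn[z]]; rewrite negb_imply => /andP[xz /existsPn H].
have HS r : r \in S -> d r x = d r z.
  by move=> rS; move: (H r); rewrite rS /= negbK => /eqP.
have [y [yu HSy hy]] : exists y, [/\ y != u, forall r, r \in S -> d r u = d r y & d v y = 1].
  case: (Spair xz HS) => [[xu hz]|[zu hx]].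
    exists z; split => //; first by rewrite -xu eq_sym.
    by move=> r rS; rewrite -xu (HS r rS).
  exists x; split => //; first by rewrite -zu.
  by move=> r rS; rewrite -zu (HS r rS).
exists y => // x' z' x'z'.
case: (boolP [exists r in y |: S, d r x' != d r z']) => [/existsP[r /andP[rin ne]]|H'].
  by exists r.
have HS' r : r \in S -> d r x' = d r z'.
  move=> rS; apply/eqP; move/existsPn: H' => /(_ r); rewrite negb_and negbK.
  by rewrite in_setU1 rS orbT.
case: (Spair x'z' HS') => [[xu hz]|[zu hx]].
  subst x'; have z'u : z' != u by rewrite eq_sym.
  exact: (c2u yu HSy hy z'u HS' hz).
subst z'; have [r rin ne] := c2u yu HSy hy x'z' (fun r rS => Logic.eq_sym (HS' r rS)) hx.
by exists r; rewrite // eq_sym.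
Qed.

End Case2.
End Main.

Theorem theorem3 (T : finType) (e : rel T) (u v : T) :
  simple_graph e ->
  connected_graph e ->
  e u v -> (forall w, e u w -> w = v) ->
  cut_vertex e v ->
  at_least_two_components e (~: [set v; u]) ->
  ~ basis_forced e u.
Proof.
move=> [esym eirr] conn euv upend _ [a [b [aS bS nK]]] forced.
have two : exists a b, [/\ a \in ~: [set v; u], b \in ~: [set v; u]
     & ~~ connect (induced e (~: [set v; u])) a b].
  by exists a, b; split.
have ex : exists n, [exists B : {set T}, (#|B| == n) && resolvingb e B].
  exists #|[set: T]|; apply/existsP; exists setT; rewrite eqxx /=.
  apply/resolvingP => x y xy; exists x; first by rewrite in_setT.
  rewrite (dist0 conn) eq_sym; apply/eqP => /(dist0E conn) h.
  by rewrite h eqxx in xy.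
case: (ex_minnP ex) => n /existsP[B /andP[/eqP cB /resolvingP rB]] nmin.
have Bmin S : resolving e S -> #|B| <= #|S|.
  move=> /resolvingP rS; rewrite cB; apply: nmin; apply/existsP; exists S.
  by rewrite eqxx rS.
have uB : u \in B := forced B (conj rB Bmin).
have [w wu wres] : exists2 w, w != u & resolving e (w |: B :\ u).
  case: (boolP [exists c in ~: [set v; u], [forall r in B :\ u,
      ~~ connect (induced e (~: [set v; u])) c r]]).
    move/existsP => [c /andP[cS /forallP cm]].
    have cmiss r : r \in B :\ u -> ~~ connect (induced e (~: [set v; u])) c r.
      by move=> rS; move: (cm r) => /implyP; apply.
    have [w [wS Kcw wv]] := toward esym conn upend cS.
    exists w; first by case: (S'_neq wS).
    exact: (case1 esym eirr conn euv upend rB two cmiss wS Kcw wv).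
  move=> H; apply: (case2 esym eirr conn euv upend rB Bmin uB two).
  move=> t tS; move/existsPn: H => /(_ t); rewrite tS /= => /forallPn[r].
  by rewrite negb_imply negbK => /andP[rS Ktr]; exists r.
have B'min S : resolving e S -> #|w |: B :\ u| <= #|S|.
  move=> rS; apply: leq_trans (Bmin S rS).
  rewrite cardsU1 [#|B|](cardsD1 u B) uB leq_add2r.
  exact: leq_b1.
have := forced _ (conj wres B'min).
rewrite in_setU1 in_setD1 eqxx /= orbF => /eqP uw.
by rewrite uw eqxx in wu.
Qed.
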